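(* Let $R$ be a ring, let $\{A_i\mid i\in I\}$ be a family of slender right $R$-modules with local endomorphism rings, and let $\{B_j\mid j\in J\}$ be a family of indecomposable slender right $R$-modules. Assume: (a) $|I|$ and $|J|$ are non-measurable cardinals; (b) in each of the two families, each isomorphism class contains at most countably many members; (c) $\prod_{i\in I}A_i\cong\prod_{j\in J}B_j$. Then there exists a bijection $\sigma\colon I\to J$ with $A_i\cong B_{\sigma(i)}$ for every $i\in I$.
   Context: A right $R$-module $M$ is slender if for every homomorphism $f\colon R^\omega=\prod_{n<\omega}e_nR\to M$ (with $e_n$ the element having $1$ in position $n$ and $0$ elsewhere) there is $n_0$ with $f(e_n)=0$ for all $n\ge n_0$. *)

(* Defs.v *)
(* Right R-modules are modelled as left modules over the
   converse ring R^c: for M : lmodType R^c, the right action m.r is r *: m. *)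
From HB Require Import structures.
From mathcomp Require Import all_boot all_order all_algebra.
Set Implicit Arguments. Unset Strict Implicit. Unset Printing Implicit Defensive.
Import GRing.Theory.
Local Open Scope ring_scope.

Definition mod_iso (R : pzRingType) (M N : lmodType R) : Prop :=
  exists f : {linear M -> N}, bijective f.

Definition unit_vec (R : pzRingType) (n : nat) : nat -> R :=
  fun k => if k == n then 1 else 0.

(* M (a right R-module) is slender: every right R-module homomorphism
   f : R^omega -> M kills almost all e_n.  R^omega is nat -> R with pointwise
   addition and right action (x.r)_n = x_n * r. *)
Definition slender (R : pzRingType) (M : lmodType R^c) : Prop :=
  forall f : (nat -> R) -> M,
    (forall x y, f (fun n => x n + y n) = f x + f y) ->
    (forall (x : nat -> R) (r : R), f (fun n => x n * r) = (r : R^c) *: f x) ->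
    exists n0 : nat, forall n, (n0 <= n)%N -> f (unit_vec R n) = 0.

Definition End_unit (R : pzRingType) (M : lmodType R) (f : {linear M -> M}) : Prop :=
  bijective f.

(* End(M) is a local ring: 1 <> 0 in End(M) (i.e. M <> 0) and the non-units
   of End(M) are closed under addition (hence form an ideal). *)
Definition local_End (R : pzRingType) (M : lmodType R) : Prop :=
  (exists m : M, m != 0) /\
  forall f g : {linear M -> M},
    ~ End_unit f -> ~ End_unit g ->
    ~ (exists h : {linear M -> M}, (forall m, h m = f m + g m) /\ End_unit h).

Definition submodule (R : pzRingType) (M : lmodType R) (N : M -> Prop) : Prop :=
  N 0 /\ (forall x y, N x -> N y -> N (x + y)) /\ (forall (r : R) x, N x -> N (r *: x)).

Definition indecomposable (R : pzRingType) (M : lmodType R) : Prop :=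
  (exists m : M, m != 0) /\
  forall N P : M -> Prop, submodule N -> submodule P ->
    (forall m, N m -> P m -> m = 0) ->
    (forall m, exists n p, N n /\ P p /\ m = n + p) ->
    (forall m, N m -> m = 0) \/ (forall m, P m -> m = 0).

Definition ultrafilter (I : Type) (U : (I -> Prop) -> Prop) : Prop :=
  ~ U (fun _ => False) /\
  (forall X Y : I -> Prop, U X -> (forall i, X i -> Y i) -> U Y) /\
  (forall X Y : I -> Prop, U X -> U Y -> U (fun i => X i /\ Y i)) /\
  (forall X : I -> Prop, U X \/ U (fun i => ~ X i)).

Definition countably_complete (I : Type) (U : (I -> Prop) -> Prop) : Prop :=
  forall X : nat -> I -> Prop, (forall n, U (X n)) -> U (fun i => forall n, X n i).

Definition principal (I : Type) (U : (I -> Prop) -> Prop) : Prop :=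
  exists i0 : I, forall X : I -> Prop, U X <-> X i0.

Definition nonmeasurable (I : Type) : Prop :=
  forall U : (I -> Prop) -> Prop, ultrafilter U -> countably_complete U -> principal U.

Definition iso_classes_countable (R : pzRingType) (I : Type) (A : I -> lmodType R) : Prop :=
  forall i : I, exists g : I -> nat, forall i1 i2 : I,
    mod_iso (A i) (A i1) -> mod_iso (A i) (A i2) -> g i1 = g i2 -> i1 = i2.

Definition prod_iso (R : pzRingType) (I J : Type)
    (A : I -> lmodType R) (B : J -> lmodType R) : Prop :=
  exists f : (forall i, A i) -> (forall j, B j),
    bijective f /\
    (forall x y, f (fun i => x i + y i) = (fun j => f x j + f y j)) /\
    (forall (r : R) x, f (fun i => r *: x i) = (fun j => r *: f x j)).

(* Main.v *)
Require Import Defs.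
From HB Require Import structures.
From mathcomp Require Import all_boot all_order all_algebra.
From mathcomp Require Import boolp.
From Stdlib Require List.
Set Implicit Arguments. Unset Strict Implicit. Unset Printing Implicit Defensive.
Import GRing.Theory.
Local Open Scope ring_scope.

Section Lin.
Variables (S : pzRingType).
Definition lin (M N : lmodType S) (f : M -> N) :=
  (forall x y, f (x + y) = f x + f y) /\ (forall (r:S) x, f (r *: x) = r *: f x).
Definition mklin (M N : lmodType S) (f : M -> N) (h : lin f) : {linear M -> N} :=
  HB.pack f (GRing.isSemilinear.Build _ _ _ _ f (proj2 h, proj1 h)).
Lemma mklinE (M N : lmodType S) (f : M -> N) (h : lin f) x : mklin h x = f x.
Proof. by []. Qed.

Variables (M N K : lmodType S).
Lemma lin0 (f : M -> N) : lin f -> f 0 = 0.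
Proof. by move=> [ha _]; have h := ha 0 0; rewrite addr0 in h; apply: (addrI (f 0)); rewrite addr0 -h. Qed.
Lemma linN (f : M -> N) : lin f -> forall x, f (- x) = - f x.
Proof. by move=> h x; apply/eqP; rewrite -subr_eq0 opprK -(proj1 h) addNr lin0. Qed.
Lemma linB (f : M -> N) : lin f -> forall x y, f (x - y) = f x - f y.
Proof. by move=> h x y; rewrite (proj1 h) linN. Qed.
Lemma lin_id : lin (fun x : M => x). Proof. by []. Qed.
Lemma lin_comp (f : M -> N) (g : N -> K) : lin f -> lin g -> lin (fun x => g (f x)).
Proof. by move=> [f1 f2] [g1 g2]; split=> *; rewrite ?f1 ?g1 ?f2 ?g2. Qed.
Lemma lin_add (f g : M -> N) : lin f -> lin g -> lin (fun x => f x + g x).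
Proof.
move=> [f1 f2] [g1 g2]; split=> *; rewrite ?f1 ?g1 ?f2 ?g2 ?scalerDr //.
by rewrite addrACA.
Qed.
Lemma lin_opp (f : M -> N) : lin f -> lin (fun x => - f x).
Proof. by move=> [f1 f2]; split=> *; rewrite ?f1 ?f2 ?opprD ?scalerN. Qed.
Lemma lin_sub (f g : M -> N) : lin f -> lin g -> lin (fun x => f x - g x).
Proof. by move=> hf hg; apply: lin_add => //; apply: lin_opp. Qed.
Lemma lin_zero : lin (fun _ : M => (0 : N)).
Proof. by split=> *; rewrite ?addr0 ?scaler0. Qed.
Lemma lin_ext (f g : M -> N) : lin f -> (forall x, f x = g x) -> lin g.
Proof. by move=> [f1 f2] e; split=> *; rewrite -!e ?f1 ?f2. Qed.
Lemma lin_sum (m : nat) (F : 'I_m -> M -> N) : (forall l, lin (F l)) ->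
  lin (fun x => \sum_(l < m) F l x).
Proof.
elim: m F => [|m IH] F hF.
  by apply: (lin_ext lin_zero) => x; rewrite big_ord0.
apply: (lin_ext (lin_add (hF ord0) (IH (fun l => F (lift ord0 l)) (fun l => hF _)))).
by move=> x; rewrite big_ord_recl.
Qed.
Lemma lin_sumE (f : M -> N) (T : Type) (s : seq T) (P : pred T) (G : T -> M) : lin f ->
  f (\sum_(t <- s | P t) G t) = \sum_(t <- s | P t) f (G t).
Proof.
move=> hf; elim: s => [|t s IH]; first by rewrite !big_nil (lin0 hf).
by rewrite !big_cons; case: (P t); rewrite ?(proj1 hf) IH.
Qed.

Lemma lin_inv (f : M -> N) g : lin f -> cancel f g -> cancel g f -> lin g.
Proof.
move=> [f1 f2] h1 h2; split=> [x y|r x].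
  by rewrite -{1}[x]h2 -{1}[y]h2 -f1 h1.
by rewrite -{1}[x]h2 -f2 h1.
Qed.
End Lin.

Section Local.
Variables (S : pzRingType) (C : lmodType S).

Definition Jn (f : C -> C) := lin f /\ ~ bijective f.

Lemma bij_ext (f g : C -> C) : (forall x, f x = g x) -> bijective f -> bijective g.
Proof. by move=> e [h h1 h2]; exists h => x; rewrite -e ?h1 ?h2. Qed.

Lemma J_ext f g : Jn f -> (forall x, f x = g x) -> Jn g.
Proof.
move=> [hl hb] e; split; first exact: lin_ext hl e.
by move=> hg; apply: hb; apply: bij_ext hg => x; rewrite e.
Qed.

Lemma bij_zero_false (f : C -> C) : (exists m : C, m != 0) -> (forall x, f x = 0) -> bijective f -> False.
Proof.
move=> [m hm] f0 [h h1 h2].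
have e : m = h 0 by rewrite -(f0 m) h1.
have e0 : h 0 = 0 by rewrite -{1}(f0 0) h1.
by move: hm; rewrite e e0 eqxx.
Qed.

Variable HC : local_End C.

Lemma J_add f g : Jn f -> Jn g -> Jn (fun x => f x + g x).
Proof.
move=> [fl fb] [gl gb]; split; first exact: lin_add.
move=> hb; apply: (proj2 HC (mklin fl) (mklin gl) fb gb).
by exists (mklin (lin_add fl gl)); split.
Qed.

Lemma J0 : Jn (fun _ => 0).
Proof. by split; [exact: lin_zero | exact: (@bij_zero_false (fun _ => 0) (proj1 HC) (fun _ => erefl))]. Qed.

Lemma J_id_false : Jn (fun x => x) -> False.
Proof. by move=> [_ hb]; apply: hb; exists id. Qed.

Lemma notJ_bij f : lin f -> ~ Jn f -> bijective f.
Proof. by move=> hl hJ; apply: contrapT => hb; apply: hJ. Qed.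

Lemma idem_cases (e : C -> C) : lin e -> (forall x, e (e x) = e x) ->
  (forall x, e x = x) \/ (forall x, e x = 0).
Proof.
move=> el ee.
have l1 : lin (fun x => x - e x) by apply: lin_sub => //; exact: lin_id.
case: (pselect (bijective e)) => [[h h1 h2]|nb1].
  by left => x; rewrite -{2}[x]h2 -{1}[x]h2 ee.
case: (pselect (bijective (fun x => x - e x))) => [[h h1 h2]|nb2].
  right => x; have H1 := h1 (e x); have H0 := h1 0.
  rewrite /= ee subrr in H1; rewrite /= (lin0 el) subrr in H0.
  by rewrite -H1 H0.
exfalso; apply: J_id_false; apply: J_ext (J_add (conj el nb1) (conj l1 nb2)) _.
by move=> x; rewrite addrC subrK.
Qed.

Lemma J_compr a b : Jn a -> lin b -> Jn (fun x => b (a x)).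
Proof.
move=> [al ab] bl; split; first exact: lin_comp.
move=> [h h1 h2].
have el : lin (fun x => a (h (b x))).
  apply: lin_comp => //; apply: lin_comp => //; exact: lin_inv (lin_comp al bl) h1 h2.
have ee : forall x, a (h (b (a (h (b x))))) = a (h (b x)) by move=> x; rewrite h1.
case: (idem_cases el ee) => H.
  by apply: ab; exists (fun x => h (b x)) => x; [exact: h1 | exact: H].
apply: (@bij_zero_false (fun x => b (a x)) (proj1 HC)) => [x|]; last by exists h.
by rewrite -{1}[x]h1 H (lin0 bl).
Qed.

Lemma J_compl a b : Jn a -> lin b -> Jn (fun x => a (b x)).
Proof.
move=> [al ab] bl; split; first exact: lin_comp.
move=> [h h1 h2].
have hl : lin h by exact: lin_inv (lin_comp bl al) h1 h2.
have el : lin (fun x => b (h (a x))) by apply: lin_comp => //; apply: lin_comp.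
have ee : forall x, b (h (a (b (h (a x))))) = b (h (a x)) by move=> x; rewrite h2.
case: (idem_cases el ee) => H.
  by apply: ab; exists (fun x => b (h x)) => x; [exact: H | exact: h2].
apply: (@bij_zero_false (fun x => a (b x)) (proj1 HC)) => [x|]; last by exists h.
by rewrite -[a (b x)]h2 H (lin0 al).
Qed.

Lemma J_opp f : Jn f -> Jn (fun x => - f x).
Proof.
move=> hf; apply: J_ext (J_compr hf (lin_opp (@lin_id _ C))) _ => x //.
Qed.

Lemma J_sub f g : Jn f -> Jn g -> Jn (fun x => f x - g x).
Proof. by move=> hf hg; apply: J_add => //; apply: J_opp. Qed.

Lemma J_sum (m : nat) (F : 'I_m -> C -> C) : (forall l, Jn (F l)) ->
  Jn (fun x => \sum_(l < m) F l x).
Proof.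
elim: m F => [|m IH] F hF.
  by apply: (J_ext J0) => x; rewrite big_ord0.
apply: (J_ext (J_add (hF ord0) (IH (fun l => F (lift ord0 l)) (fun l => hF _)))).
by move=> x; rewrite big_ord_recl.
Qed.

Lemma J_sum_list (T : Type) (s : seq T) (P : pred T) (G : T -> C -> C) :
  (forall t, P t -> Jn (G t)) -> Jn (fun c => \sum_(t <- s | P t) G t c).
Proof.
move=> hG; elim: s => [|t s IH].
  by apply: (J_ext J0) => c; rewrite big_nil.
case Pt: (P t).
  by apply: (J_ext (J_add (hG t Pt) IH)) => c; rewrite big_cons Pt.
by apply: (J_ext IH) => c; rewrite big_cons Pt.
Qed.

Lemma rank_le n m (Y : 'I_n -> 'I_m -> C -> C) (X : 'I_m -> 'I_n -> C -> C) :
  (forall k l, lin (Y k l)) -> (forall l k, lin (X l k)) ->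
  (forall k k', Jn (fun c => \sum_(l < m) Y k l (X l k' c) - (if k == k' then c else 0))) ->
  (n <= m)%N.
Proof.
elim: n m Y X => [|n IH] m Y X hY hX hJ; first by [].
have [l0 hl0] : exists l0, ~ Jn (fun c => Y ord0 l0 (X l0 ord0 c)).
  apply: contrapT => hn.
  have hall : forall l, Jn (fun c => Y ord0 l (X l ord0 c)).
    by move=> l; apply: contrapT => h; apply: hn; exists l.
  apply: J_id_false; apply: (J_ext (J_sub (J_sum hall) (hJ ord0 ord0))) => c.
  by rewrite eqxx opprB addrC subrK.
revert Y X hY hX hJ l0 hl0; case: m => [|m'] Y X hY hX hJ l0 hl0; first by move: (ltn_ord l0).
have hu : bijective (Y ord0 l0).
  apply: notJ_bij => // hJu; apply: hl0; exact: J_compl hJu (hX _ _).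
case: hu => u' hu1 hu2.
have hu' : lin u' by exact: lin_inv (hY _ _) hu1 hu2.
rewrite ltnS; apply: (IH m' (fun k l c => Y (lift ord0 k) (lift l0 l) c
    - Y (lift ord0 k) l0 (u' (Y ord0 (lift l0 l) c)))
   (fun l k => X (lift l0 l) (lift ord0 k))).
- move=> k l; apply: lin_sub => //; apply: lin_comp => //; exact: lin_comp.
- by move=> l k.
move=> k k'.
set K := lift ord0 k; set K' := lift ord0 k'.
have lw : lin (fun c => Y K l0 (u' c)) by apply: lin_comp.
have hj := J_sub (hJ K K') (J_compr (hJ ord0 K') lw).
apply: (J_ext hj) => c.
have eKK : (K == K') = (k == k') by rewrite /K /K' (inj_eq (@lift_inj _ ord0)).
have e0K : (ord0 == K') = false by apply/negbTE; exact: neq_lift.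
rewrite eKK e0K subr0.
rewrite !(bigD1_ord l0) //= (proj1 hu') hu1 (proj1 (hY K l0)).
rewrite big_split /= sumrN -(lin_sumE _ _ _ lw).
set a := Y K l0 (X l0 K' c); set s := \sum_(i < m') Y K (lift l0 i) _.
set b := Y K l0 (u' _); set d := (if _ then _ else _).
by rewrite opprD addrA (addrC a s) (addrAC (s + a)) addrK addrAC.
Qed.


Lemma local_indec : indecomposable C.
Proof.
split; first exact: (proj1 HC).
move=> N P [N0 [NA NS]] [P0 [PA PS]] NP dec.
have Nopp : forall x, N x -> N (- x) by move=> x /(NS (-1)); rewrite scaleN1r.
have Popp : forall x, P x -> P (- x) by move=> x /(PS (-1)); rewrite scaleN1r.
have uniq : forall n p n' p', N n -> P p -> N n' -> P p' -> n + p = n' + p' -> n = n'.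
  move=> n p n' p' hn hp hn' hp' e.
  have : n - n' = p' - p by rewrite -[n](addrK p) e addrC -(addrA n') addKr.
  move=> e2; apply/eqP; rewrite -subr_eq0; apply/eqP; apply: NP.
    by apply: NA => //; apply: Nopp.
  by rewrite e2; apply: PA => //; apply: Popp.
pose e x := projT1 (cid (dec x)).
have eN : forall x, N (e x) /\ exists p, P p /\ x = e x + p.
  move=> x; rewrite /e; case: (cid (dec x)) => n /= [p [hn [hp ->]]].
  by split => //; exists p.
have eE : forall x n p, N n -> P p -> x = n + p -> e x = n.
  move=> x n p hn hp ex; case: (eN x) => hn' [p' [hp' ex']].
  by apply: (uniq _ p' _ p) => //; rewrite -ex' -ex.
have el : lin e.
  split=> [x y|r x].
    case: (eN x) => hx [px [hpx ex]]; case: (eN y) => hy [py [hpy ey]].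
    apply: (eE _ _ (px + py)) => //; [exact: NA | exact: PA |].
    by rewrite {1}ex {1}ey addrACA.
  case: (eN x) => hx [px [hpx ex]].
  apply: (eE _ _ (r *: px)) => //; [exact: NS | exact: PS |].
  by rewrite {1}ex scalerDr.
have ee : forall x, e (e x) = e x.
  by move=> x; apply: (eE _ _ 0) => //; [exact: (proj1 (eN x)) | rewrite addr0].
case: (idem_cases el ee) => H; [right | left] => m hm.
  by rewrite -(H m); apply: (eE _ 0 m) => //; rewrite add0r.
by rewrite -(H m); symmetry; apply: (eE _ _ 0) => //; rewrite addr0.
Qed.

End Local.

Lemma retract_bij (S : pzRingType) (C B : lmodType S) (u : C -> B) (v : B -> C) :
  (exists m : C, m != 0) -> indecomposable B -> lin u -> lin v ->
  (forall c, v (u c) = c) -> bijective u.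
Proof.
move=> [m hm] [_ hB] ul vl vu.
have el : lin (fun x => u (v x)) by apply: lin_comp.
have ee : forall x, u (v (u (v x))) = u (v x) by move=> x; rewrite vu.
have sN : submodule (fun x => u (v x) = x).
  split; first by rewrite (lin0 el).
  split=> [x y hx hy|r x hx]; first by rewrite (proj1 el) hx hy.
  by rewrite (proj2 el) hx.
have sP : submodule (fun x => u (v x) = 0).
  split; first by rewrite (lin0 el).
  split=> [x y hx hy|r x hx]; first by rewrite (proj1 el) hx hy addr0.
  by rewrite (proj2 el) hx scaler0.
case: (hB _ _ sN sP).
- by move=> x hx hx0; rewrite -hx hx0.
- move=> x; exists (u (v x)), (x - u (v x)); split; first exact: ee.
  split; last by rewrite addrC subrK.
  by rewrite (linB el) ee subrr.
- move=> H; exfalso; move: hm; rewrite -(vu m) (H (u m)) ?(lin0 vl) ?eqxx //.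
  by rewrite vu.
- move=> H; exists v => // x.
  have := H (x - u (v x)); rewrite (linB el) ee subrr => /(_ erefl) /eqP.
  by rewrite subr_eq0 => /eqP.
Qed.

Section Los.
Variables (R : pzRingType) (I : Type) (A : I -> lmodType R^c) (M : lmodType R^c).
Variable g : (forall i, A i) -> M.
Hypothesis gadd : forall x y, g (fun i => x i + y i) = g x + g y.
Hypothesis gscale : forall (r : R) x, g (fun i => (r : R^c) *: x i) = (r : R^c) *: g x.

Definition small (X : I -> Prop) := forall x : forall i, A i, (forall i, ~ X i -> x i = 0) -> g x = 0.

Lemma g0 : g (fun i => 0) = 0.
Proof.
have := gadd (fun i => 0) (fun i => 0).
have -> : (fun i => (0 : A i) + 0) = (fun i => 0) by apply: functional_extensionality_dep => i; rewrite addr0.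
by move=> h; apply: (addrI (g (fun i => 0))); rewrite addr0 -h.
Qed.

Lemma key (sl : slender M) (c : I -> option nat) : exists n0, forall x : forall i, A i,
  (forall i, ~ (exists n, c i = Some n /\ (n0 <= n)%N) -> x i = 0) -> g x = 0.
Proof.
apply: contrapT => H.
have H' : forall n0, exists x : forall i, A i,
    (forall i, ~ (exists n, c i = Some n /\ (n0 <= n)%N) -> x i = 0) /\ g x <> 0.
  move=> n0; apply: contrapT => hn; apply: H; exists n0 => x hx.
  by apply: contrapT => gx; apply: hn; exists x.
case: (choice H') => xs hxs.
pose h (r : nat -> R) : M := g (fun i => match c i with
   | Some n => \sum_(k < n.+1) (r k : R^c) *: xs k i | None => 0 end).
have [n0 hn0] : exists n0 : nat, forall n, (n0 <= n)%N -> h (unit_vec R n) = 0.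
  apply: sl.
  move=> x y; rewrite /h -gadd; congr g; apply: functional_extensionality_dep => i.
  case: (c i) => [n|]; last by rewrite addr0.
  by rewrite -big_split; apply: eq_bigr => k _; rewrite scalerDl.
  move=> x r; rewrite /h -gscale; congr g; apply: functional_extensionality_dep => i.
  case: (c i) => [n|]; last by rewrite scaler0.
  by rewrite scaler_sumr; apply: eq_bigr => k _; rewrite scalerA.
have := hn0 n0 (leqnn n0); rewrite /h.
have -> : (fun i => match c i with
   | Some n => \sum_(k < n.+1) (unit_vec R n0 k : R^c) *: xs k i | None => 0 end) = xs n0.
  apply: functional_extensionality_dep => i.
  have hs := (proj1 (hxs n0) i).
  case E: (c i) => [n|]; last by rewrite hs // => -[n [hn _]]; rewrite E in hn.
  case: (leqP n0 n) => hle.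
    rewrite (bigD1 (Ordinal (hle : (n0 < n.+1)%N))) //= /unit_vec eqxx scale1r big1 ?addr0 //.
    move=> k hk; case: eqP => ek; last by rewrite scale0r.
    by exfalso; move: hk; apply/negP; rewrite negbK; apply/eqP; apply: val_inj.
  rewrite hs ?big1 // => [k _|[m []]]; last by rewrite E => -[<-] hm; move: hm; rewrite leqNgt hle.
    rewrite /unit_vec; case: eqP => ek; last by rewrite scale0r.
  by exfalso; move: (ltn_ord k); rewrite ek ltnS leqNgt hle.
by apply: (proj2 (hxs n0)).
Qed.

Definition restr (X : I -> Prop) (x : forall i, A i) : forall i, A i :=
  fun i => if pselect (X i) then x i else 0.

Lemma g_split X x : g x = g (restr X x) + g (restr (fun i => ~ X i) x).
Proof.
rewrite -gadd; congr g; apply: functional_extensionality_dep => i; rewrite /restr.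
case: pselect => h1; case: pselect => h2 //; by [rewrite addr0 | rewrite add0r].
Qed.

Lemma small_sub (X Y : I -> Prop) : (forall i, X i -> Y i) -> small Y -> small X.
Proof. by move=> sXY hY x hx; apply: hY => i hi; apply: hx => /sXY. Qed.

Lemma small_U X Y : small X -> small Y -> small (fun i => X i \/ Y i).
Proof.
move=> hX hY x hx; rewrite (g_split X x) hX ?hY ?addr0 // => i hi; rewrite /restr.
  by case: pselect => // h; apply: hx => -[].
by case: pselect => // h; apply: hx => -[].
Qed.

Lemma small_fin (c : I -> option nat) n0 : (forall n, small (fun i => c i = Some n)) ->
  small (fun i => exists n, c i = Some n /\ (n < n0)%N).
Proof.
move=> hs; elim: n0 => [|n0 IH].
  by move=> x hx; rewrite -g0; congr g; apply: functional_extensionality_dep => i; apply: hx => -[n []].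
apply: small_sub (small_U IH (hs n0)) => i [n [hn]]; rewrite ltnS leq_eqVlt.
by case/orP => [/eqP <-|hlt]; [right | left; exists n].
Qed.

Lemma small_count (sl : slender M) (c : I -> option nat) : (forall n, small (fun i => c i = Some n)) ->
  small (fun i => exists n, c i = Some n).
Proof.
move=> hs; have [n0 hn0] := key sl c.
move=> x hx; pose T := fun i => exists n, c i = Some n /\ (n0 <= n)%N.
have e1 : g (restr T x) = 0 by apply: hn0 => i hi; rewrite /restr; case: pselect.
have e2 : g (restr (fun i => ~ T i) x) = 0.
  have := small_fin (n0 := n0) hs (x := restr (fun i => ~ T i) x); apply => i hi; rewrite /restr.
  case: pselect => // hT; apply: hx => -[n hn]; apply: hi; exists n; split => //.
  by rewrite ltnNge; apply/negP => hle; apply: hT; exists n.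
by rewrite (g_split T x) e1 e2 addr0.
Qed.

Lemma disj_nonsmall (sl : slender M) (c : I -> option nat) :
  (forall n, ~ small (fun i => c i = Some n)) -> False.
Proof.
move=> hn; have [n0 hn0] := key sl c; apply: (hn n0) => x hx; apply: hn0 => i hi.
by apply: hx => e; apply: hi; exists n0.
Qed.

Theorem los (sl : slender M) (nm : nonmeasurable I) :
  exists F : seq I, forall x : forall i, A i, (forall i, List.In i F -> x i = 0) -> g x = 0.
Proof.
apply: contrapT => H.
pose big (X : I -> Prop) := forall F : seq I, ~ small (fun i => X i /\ ~ List.In i F).
have bigT : big (fun _ => True).
  move=> F hF; apply: H; exists F => x hx; apply: hF => i hi.
  by apply: hx; apply: contrapT => hn; apply: hi.
have big_union : forall X Y, big X -> ~ big (fun i => X i /\ Y i) -> big (fun i => X i /\ ~ Y i).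
  move=> X Y hX hXY F hF.
  have [F1 hF1] : exists F1, small (fun i => (X i /\ Y i) /\ ~ List.In i F1).
    by apply: contrapT => hn; apply: hXY => F1 h1; apply: hn; exists F1.
  apply: (hX (F1 ++ F)); apply: small_sub (small_U hF1 hF) => i [hx hi].
  rewrite List.in_app_iff in hi.
  case: (pselect (Y i)) => hy; [left | right]; (split; [by split | ]).
    by move=> h; apply: hi; left.
  by move=> h; apply: hi; right.
have [X [bX hX]] : exists X, big X /\ forall Y, small (fun i => X i /\ Y i) \/ small (fun i => X i /\ ~ Y i).
  apply: contrapT => H2.
  have step : forall X, exists Y, big X -> ~ small (fun i => X i /\ Y i) /\ big (fun i => X i /\ ~ Y i).
    move=> X; case: (pselect (big X)) => bX; last by exists (fun _ => True).
    have [Y hY] : exists Y, ~ small (fun i => X i /\ Y i) /\ ~ small (fun i => X i /\ ~ Y i).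
      apply: contrapT => hn; apply: H2; exists X; split => // Y.
      case: (pselect (small (fun i => X i /\ Y i))) => h1; first by left.
      case: (pselect (small (fun i => X i /\ ~ Y i))) => h2; first by right.
      by exfalso; apply: hn; exists Y.
    case: (pselect (big (fun i => X i /\ ~ Y i))) => hb; first by exists Y => _; case: hY.
    exists (fun i => ~ Y i) => _; split; first by case: hY.
    by apply: big_union.
  case: (choice step) => st hst.
  pose S k := iter k (fun X i => X i /\ ~ st X i) (fun _ => True).
  have bS : forall k, big (S k) by elim=> [|k IH] //=; exact: (proj2 (hst _ IH)).
  pose T k := fun i => S k i /\ st (S k) i.
  have Sdec : forall k k', (k <= k')%N -> forall i, S k' i -> S k i.
    move=> k k' /subnK <-; elim: (k' - k)%N => [|d IH] i; first by [].
    by rewrite addSn; case => /IH.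
  have Tdisj : forall k k' i, T k i -> T k' i -> k = k'.
    have aux : forall k k' i, (k < k')%N -> T k i -> T k' i -> False.
      move=> k k' i hlt [_ hk] [hk' _]; have := Sdec _ _ hlt i hk'.
      by case.
    move=> k k' i h1 h2; case: (ltngtP k k') => // hlt; exfalso.
      exact: aux hlt h1 h2.
    exact: aux hlt h2 h1.
  pose c i := match pselect (exists k, T k i) with
    | left H => Some (projT1 (cid H)) | right _ => None end.
  have cT : forall n i, T n i -> c i = Some n.
    move=> n i hn; rewrite /c; case: pselect => [H3|]; last by move=> h; exfalso; apply: h; exists n.
    by case: (cid H3) => k /= hk; congr Some; apply: Tdisj hk hn.
  apply: (disj_nonsmall sl (c := c)) => n hsn; apply: (proj1 (hst _ (bS n))).
  by apply: small_sub hsn => i hi; apply: cT.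
have nsX : ~ small X.
  by move=> hs; apply: (bX nil); apply: small_sub hs => i [].
pose U := fun Z : I -> Prop => ~ small (fun i => X i /\ Z i).
have sm_neg : forall Z, U Z -> small (fun i => X i /\ ~ Z i).
  by move=> Z hZ; case: (hX Z).
have uf : ultrafilter U.
  split.
    by apply => x hx; rewrite -g0; congr g; apply: functional_extensionality_dep => i; apply: hx => -[].
  split.
    by move=> Z W hZ hZW hs; apply: hZ; apply: small_sub hs => i [? /hZW].
  split.
    move=> Z W hZ hW hs; apply: hZ.
    apply: small_sub (small_U hs (sm_neg _ hW)) => i [xi zi].
    by case: (pselect (W i)) => wi; [left | right].
  move=> Z; case: (pselect (U Z)) => hZ; first by left.
  right => hs; apply: nsX; apply: small_sub (small_U hs (contrapT hZ)) => i xi.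
  by case: (pselect (Z i)) => zi; [right | left].
have cc : countably_complete U.
  move=> Z hZ.
  pose c i := match pselect (X i /\ exists n, ~ Z n i) with
    | left H => Some (projT1 (cid (proj2 H))) | right _ => None end.
  have hc : forall n i, c i = Some n -> X i /\ ~ Z n i.
    move=> n i; rewrite /c; case: pselect => // HH [<-].
    by case: (cid (proj2 HH)) => k /= hk; split => //; exact: proj1 HH.
  have sc : small (fun i => exists n, c i = Some n).
    apply: (small_count sl) => n; apply: small_sub (sm_neg _ (hZ n)) => i /hc.
    by [].
  move=> hs; apply: nsX; apply: small_sub (small_U hs sc) => i xi.
  case: (pselect (forall n, Z n i)) => hz; first by left.
  right; rewrite /c; case: pselect => [H3|hn]; first by eexists.
  by exfalso; apply: hn; split => //; apply: contrapT => hn; apply: hz => n; apply: contrapT => hzn; apply: hn; exists n.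
have [i0 hi0] := nm U uf cc.
have := (proj1 (hi0 (fun i => i <> i0))); rewrite /U => h.
have hs : small (fun i => X i /\ i <> i0).
  by apply: contrapT => hn; have := h hn.
apply: (bX [:: i0]); apply: small_sub hs => i [xi hi]; split => // e; apply: hi; by left; rewrite e.
Qed.

Lemma nodup_exists (F0 : seq I) : exists F, List.NoDup F /\ forall i, List.In i F0 <-> List.In i F.
Proof.
elim: F0 => [|a F0 [F [hF hE]]]; first by exists nil; split => //; constructor.
case: (pselect (List.In a F)) => ha.
  exists F; split => // i; split => [[<-|/hE]|/hE] //; by right.
exists (a :: F); split; first by constructor.
move=> i; split => [[<-|/hE]|[<-|/hE]]; by [left | right].
Qed.

Definition single (l : I) (v : A l) : forall i, A i :=
  fun i => match pselect (l = i) with left e => eq_rect l A v i e | right _ => 0 end.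
Arguments single : clear implicits.

Lemma single_id (l : I) (v : A l) : single l v l = v.
Proof. by rewrite /single; case: pselect => // e; rewrite (Prop_irrelevance e erefl). Qed.

Lemma single_ne (l : I) (v : A l) i : l <> i -> single l v i = 0.
Proof. by rewrite /single; case: pselect. Qed.

Lemma support_sum (F : seq I) : List.NoDup F ->
  (forall x : forall i, A i, (forall i, List.In i F -> x i = 0) -> g x = 0) ->
  forall x, g x = \sum_(l <- F) g (single l (x l)).
Proof.
move=> nd hF0 x.
have e2 : g (restr (fun i => ~ List.In i F) x) = 0.
  apply: hF0 => i hi; rewrite /restr; case: pselect => //.
rewrite (g_split (fun i => List.In i F) x) e2 addr0 {hF0 e2}.
elim: F nd => [|a F IH] nd.
  rewrite big_nil -g0; congr g; apply: functional_extensionality_dep => i.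
  by rewrite /restr; case: pselect.
inversion nd as [|a' F' ha nd']; subst.
rewrite big_cons -IH // -gadd; congr g; apply: functional_extensionality_dep => i.
rewrite /restr; case: (pselect (a = i)) => [eai|hai].
  subst i; rewrite single_id; destruct (pselect (List.In a (a :: F))) as [h1|hn]; last by exfalso; apply: hn; left.
  by destruct (pselect (List.In a F)) => //; rewrite addr0.
rewrite single_ne // add0r; destruct (pselect (List.In i (a :: F))) as [h2|hn].
  by case: h2 => // hi; destruct (pselect (List.In i F)).
by destruct (pselect (List.In i F)) as [hi|] => //; exfalso; apply: hn; right.
Qed.
End Los.
Arguments single {R I A} l v i.

Section Single.
Variables (R : pzRingType) (I : Type) (A : I -> lmodType R^c).
Lemma single_add l (a b : A l) : single l (a + b) = (fun i => single l a i + single l b i).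
Proof.
apply: functional_extensionality_dep => i; rewrite /single.
by case: pselect => [e|_]; [case: i / e | rewrite addr0].
Qed.
Lemma single_scale l (r : R) (a : A l) : single l ((r : R^c) *: a) = (fun i => (r : R^c) *: single l a i).
Proof.
apply: functional_extensionality_dep => i; rewrite /single.
by case: pselect => [e|_]; [case: i / e | rewrite scaler0].
Qed.
End Single.

Section Iso.
Variable S : pzRingType.
Definition isoF (M N : lmodType S) : M -> N :=
  match pselect (mod_iso M N) with left H => (projT1 (cid H) : M -> N) | right _ => fun _ => 0 end.
Arguments isoF : clear implicits.
Definition isoG (M N : lmodType S) : N -> M :=
  match pselect (exists g, cancel (isoF M N) g /\ cancel g (isoF M N)) with
  | left H => projT1 (cid H) | right _ => fun _ => 0 end.
Arguments isoG : clear implicits.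

Lemma iso_spec (M N : lmodType S) : mod_iso M N ->
  [/\ lin (isoF M N), lin (isoG M N), cancel (isoF M N) (isoG M N) & cancel (isoG M N) (isoF M N)].
Proof.
move=> H.
have [hl hb] : lin (isoF M N) /\ bijective (isoF M N).
  rewrite /isoF; case: pselect => // H'; case: (cid H') => f /= hf.
  by split => //; split => *; rewrite ?raddfD ?linearZ.
have H2 : exists g, cancel (isoF M N) g /\ cancel g (isoF M N) by case: hb => g ? ?; exists g.
have [c1 c2] : cancel (isoF M N) (isoG M N) /\ cancel (isoG M N) (isoF M N).
  by rewrite /isoG; case: pselect => // H3; case: (cid H3) => g /=.
by split => //; apply: lin_inv hl c1 c2.
Qed.

Lemma mod_iso_of (M N : lmodType S) (f : M -> N) : lin f -> bijective f -> mod_iso M N.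
Proof. by move=> hl hb; exists (mklin hl). Qed.

Lemma mod_iso_sym (M N : lmodType S) : mod_iso M N -> mod_iso N M.
Proof.
move=> /iso_spec [l1 l2 c1 c2]; apply: (mod_iso_of l2); by exists (isoF M N).
Qed.

Lemma mod_iso_trans (M N K : lmodType S) : mod_iso M N -> mod_iso N K -> mod_iso M K.
Proof.
move=> /iso_spec [l1 l2 c1 c2] /iso_spec [l3 l4 c3 c4].
apply: (mod_iso_of (lin_comp l1 l3)).
by exists (fun x => isoG M N (isoG N K x)) => x; rewrite ?c3 ?c1 ?c2 ?c4.
Qed.

Lemma mod_iso_refl (M : lmodType S) : mod_iso M M.
Proof. by apply: (mod_iso_of (@lin_id _ M)); exists id. Qed.
End Iso.
Arguments isoF {S} M N.
Arguments isoG {S} M N.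

Section SeqAux.
Variable T : Type.
Lemma In_nth (s : seq T) x0 n : (n < size s)%N -> List.In (nth x0 s n) s.
Proof. elim: s n => [|a s IH] [|n] //= h; [by left | right; exact: IH]. Qed.

Lemma nodup_nth (s : seq T) x0 n n' : List.NoDup s -> (n < size s)%N -> (n' < size s)%N ->
  nth x0 s n = nth x0 s n' -> n = n'.
Proof.
elim: s n n' => [|a s IH] [|n] [|n'] //= nd h h'; inversion nd; subst.
- by move=> e; exfalso; apply: H1; rewrite e; exact: In_nth.
- by move=> e; exfalso; apply: H1; rewrite -e; exact: In_nth.
- by move=> /(IH _ _ H2 h h') ->.
Qed.

Lemma In_filter (p : pred T) (s : seq T) x : List.In x (filter p s) <-> List.In x s /\ p x.
Proof.
elim: s => [|a s IH] /=; first by split => -[].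
case pa: (p a) => /=.
  split => [[<-|/IH [h1 h2]]|[[<-|h1] h2]]; by [split; [left|] | split; [right|] | left | right; apply/IH].
split => [/IH [h1 h2]|[[ea|h1] h2]]; [by split; [right|] | | by apply/IH].
by subst; rewrite pa in h2.
Qed.

Lemma NoDup_filter_m (p : pred T) (s : seq T) : List.NoDup s -> List.NoDup (filter p s).
Proof.
elim: s => [|a s IH] //= nd; inversion nd; subst.
case: (p a); last exact: IH.
by constructor; [move/In_filter => [] | exact: IH].
Qed.
End SeqAux.

Section Count.
Variables (R : pzRingType) (I J : Type) (A : I -> lmodType R^c) (B : J -> lmodType R^c).
Variables (phi : (forall i, A i) -> (forall j, B j)) (psi : (forall j, B j) -> (forall i, A i)).
Hypothesis c1 : forall x, psi (phi x) = x.
Hypothesis c2 : forall y, phi (psi y) = y.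
Hypothesis padd : forall x y, phi (fun i => x i + y i) = (fun j => phi x j + phi y j).
Hypothesis pscale : forall (r : R) x, phi (fun i => (r:R^c) *: x i) = (fun j => (r:R^c) *: phi x j).

Lemma inv_add y z : psi (fun j => y j + z j) = (fun i => psi y i + psi z i).
Proof. by rewrite -{1}[y]c2 -{1}[z]c2 -padd c1. Qed.
Lemma inv_scale (r : R) y : psi (fun j => (r:R^c) *: y j) = (fun i => (r:R^c) *: psi y i).
Proof. by rewrite -{1}[y]c2 -pscale c1. Qed.

Lemma lin_ps j i : lin (fun b : B j => psi (single j b) i).
Proof. by split=> [a b|r a]; rewrite ?single_add ?single_scale ?inv_add ?inv_scale. Qed.
Lemma lin_ph i j : lin (fun a : A i => phi (single i a) j).
Proof. by split=> [a b|r a]; rewrite ?single_add ?single_scale ?padd ?pscale. Qed.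

Lemma count_dir (slA : forall i, slender (A i)) (nmJ : nonmeasurable J)
  (indB : forall j, indecomposable (B j)) (C : lmodType R^c) (HC : local_End C) (L : seq I) :
  List.NoDup L -> (forall k, List.In k L -> mod_iso C (A k)) ->
  exists L2 : seq J, List.NoDup L2 /\ (forall j, List.In j L2 -> mod_iso C (B j)) /\ (size L <= size L2)%N.
Proof.
move=> ndL isoL.
have gadd : forall i y z, psi (fun j => y j + z j) i = psi y i + psi z i by move=> i y z; rewrite inv_add.
have gscale : forall i (r : R) y, psi (fun j => (r:R^c) *: y j) i = (r:R^c) *: psi y i by move=> i r y; rewrite inv_scale.
have supp : forall i, exists F : seq J, forall y, (forall j, List.In j F -> y j = 0) -> psi y i = 0.
  by move=> i; apply: (los (g := fun y => psi y i) (gadd i) (gscale i) (slA i) nmJ).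
case: (choice supp) => Fs hFs.
have [F [ndF hF]] := nodup_exists (List.concat (List.map Fs L)).
have decomp : forall k, List.In k L -> forall y, psi y k = \sum_(j <- F) psi (single j (y j)) k.
  move=> k hk; apply: (support_sum (g := fun y => psi y k) (gadd k) ndF) => y hy.
  apply: hFs => j hj; apply: hy; apply/hF; apply/List.in_concat; exists (Fs k); split => //.
  exact: List.in_map.
pose P := fun j => `[< mod_iso C (B j) >].
pose FC := filter P F.
have FCiso : forall j, List.In j FC -> mod_iso C (B j).
  by move=> j /In_filter [_ /asboolP].
exists FC; split; first exact: NoDup_filter_m.
split => //.
pose ik (k : 'I_(size L)) := tnth (in_tuple L) k.
pose jl (l : 'I_(size FC)) := tnth (in_tuple FC) l.
have ikL : forall k, List.In (ik k) L by move=> k; rewrite /ik (tnth_nth (tnth_default (in_tuple L) k)); apply: In_nth.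
have jlF : forall l, List.In (jl l) FC by move=> l; rewrite /jl (tnth_nth (tnth_default (in_tuple FC) l)); apply: In_nth.
have ik_inj : forall k k', ik k = ik k' -> k = k'.
  move=> k k'; rewrite /ik !(tnth_nth (tnth_default (in_tuple L) k)) => e.
  by apply: val_inj; apply: (nodup_nth ndL (ltn_ord k) (ltn_ord k') e).
pose thF i := isoF C (A i); pose thG i := isoG C (A i).
pose taF j := isoF C (B j); pose taG j := isoG C (B j).
have thS : forall k, [/\ lin (thF (ik k)), lin (thG (ik k)), cancel (thF (ik k)) (thG (ik k)) & cancel (thG (ik k)) (thF (ik k))].
  by move=> k; apply: iso_spec; apply: isoL.
have taS : forall l, [/\ lin (taF (jl l)), lin (taG (jl l)), cancel (taF (jl l)) (taG (jl l)) & cancel (taG (jl l)) (taF (jl l))].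
  by move=> l; apply: iso_spec; apply: FCiso.
pose Y k l := fun c => thG (ik k) (psi (single (jl l) (taF (jl l) c)) (ik k)).
pose X l k := fun c => taG (jl l) (phi (single (ik k) (thF (ik k) c)) (jl l)).
apply: (rank_le HC (Y := Y) (X := X)).
- move=> k l; case: (thS k) => _ l2 _ _; case: (taS l) => l3 _ _ _.
  by apply: lin_comp l2; apply: lin_comp l3 (lin_ps _ _).
- move=> l k; case: (thS k) => l1 _ _ _; case: (taS l) => _ l4 _ _.
  by apply: lin_comp l4; apply: lin_comp l1 (lin_ph _ _).
move=> k k'.
case: (thS k) => l1 l2 h1 h2; case: (thS k') => l1' l2' h1' h2'.
pose G j c := thG (ik k) (psi (single j (phi (single (ik k') (thF (ik k') c)) j)) (ik k)).
have claim1 : forall c, \sum_(l < size FC) Y k l (X l k' c) = \sum_(j <- F | P j) G j c.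
  move=> c; rewrite -[RHS]big_filter -/FC [RHS]big_tnth; apply: eq_bigr => l _.
  by rewrite /Y /X /G -/(jl l); case: (taS l) => _ _ _ ->.
have claim2 : forall c, \sum_(j <- F) G j c = if k == k' then c else 0.
  move=> c; have := decomp (ik k) (ikL k) (phi (single (ik k') (thF (ik k') c))).
  rewrite c1 => e; rewrite /G -(lin_sumE _ _ _ l2) -e.
  case: eqP => [ekk|nkk]; first by subst k'; rewrite single_id h1.
  by rewrite single_ne ?(lin0 l2) // => e'; apply: nkk; apply: ik_inj.
have claim3 : Jn (fun c => \sum_(j <- F | ~~ P j) G j c).
  apply: (J_sum_list HC) => j hPj.
  have lu : lin (fun c => phi (single (ik k') (thF (ik k') c)) j) by apply: lin_comp l1' (lin_ph _ _).
  have lv : lin (fun b => thG (ik k) (psi (single j b) (ik k))) by apply: lin_comp (lin_ps _ _) l2.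
  split; first exact: lin_comp lu lv.
  move=> [h hh1 hh2].
  have lh : lin h by apply: lin_inv (lin_comp lu lv) hh1 hh2.
  have := retract_bij (proj1 HC) (indB j) lu (lin_comp lv lh) hh1.
  move=> hb; move/negP: hPj; apply; apply/asboolP; exact: mod_iso_of lu hb.
apply: (J_ext (J_opp HC claim3)) => c.
rewrite claim1 -claim2 [X in _ = _ - X](bigID P) /=.
by rewrite opprD addrA subrr add0r.
Qed.
End Count.

Local Close Scope ring_scope.

Section Rank.
Variable G : nat -> Prop.
Definition rk (x : nat) := count (fun y => `[< G y >]) (iota 0 x).

Lemma rkS x : rk x.+1 = rk x + `[< G x >].
Proof. by rewrite /rk -addn1 iotaD count_cat /= addn0. Qed.

Lemma rk_mono x y : (x <= y)%N -> (rk x <= rk y)%N.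
Proof. by move/subnK <-; elim: (y - x)%N => // d IH; rewrite addSn rkS (leq_trans IH) ?leq_addr. Qed.

Lemma rk_lt x y : G x -> (x < y)%N -> (rk x < rk y)%N.
Proof.
move=> Gx hxy; apply: leq_trans (rk_mono hxy); rewrite rkS.
by rewrite (_ : `[< G x >] = true) ?addn1 //; apply/asboolP.
Qed.

Lemma rk_inj x y : G x -> G y -> rk x = rk y -> x = y.
Proof.
move=> Gx Gy e; case: (ltngtP x y) => // h.
  by move: (rk_lt Gx h); rewrite e ltnn.
by move: (rk_lt Gy h); rewrite e ltnn.
Qed.

Lemma rk_down x : forall k, (k < rk x)%N -> exists y, G y /\ rk y = k.
Proof.
elim: x => [|x IH] k //; rewrite rkS.
case: (asboolP (G x)) => Gx; rewrite ?addn1 ?addn0 => hk.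
  by move: hk; rewrite ltnS leq_eqVlt => /orP [/eqP ->|/IH]; [exists x|].
exact: IH.
Qed.

Lemma rk_ge (s : seq nat) x : uniq s -> (forall y, y \in s -> G y /\ (y < x)%N) -> (size s <= rk x)%N.
Proof.
move=> us hs; rewrite /rk -size_filter; apply: uniq_leq_size => // y /hs [Gy hy].
by rewrite mem_filter mem_iota add0n hy; apply/andP; split => //; apply/asboolP.
Qed.

Lemma rk_list x : G x -> exists s : seq nat, uniq s /\ (forall y, y \in s -> G y) /\ size s = (rk x).+1.
Proof.
move=> Gx; exists (filter (fun y => `[< G y >]) (iota 0 x.+1)); split.
  by apply: filter_uniq; apply: iota_uniq.
split; first by move=> y; rewrite mem_filter => /andP [/asboolP].
by rewrite size_filter -/(rk x.+1) rkS (_ : `[< G x >] = true) ?addn1 //; apply/asboolP.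
Qed.

Lemma max_mem (s : seq nat) : s != [::] -> \max_(y <- s) y \in s.
Proof.
elim: s => // a s IH _; rewrite big_cons inE; case: s IH => [|b s] IH.
  by rewrite big_nil maxn0 eqxx.
have := IH isT; set m := \max_(y <- b :: s) y => hm.
by rewrite /maxn; case: ifP => _; [rewrite hm orbT | rewrite eqxx].
Qed.

Lemma rk_of_list (s : seq nat) k : uniq s -> (forall y, y \in s -> G y) -> size s = k.+1 ->
  exists y, G y /\ rk y = k.
Proof.
move=> us hs hsz.
pose x := \max_(y <- s) y.
have xs : x \in s.
  by apply: max_mem; case: s hsz {us hs x}.
have Gx := hs x xs.
have hk : (k <= rk x)%N.
  have := rk_ge (s := filter (fun y => y != x) s) (x := x) (filter_uniq _ us).
  rewrite size_filter.
  have -> : count (fun y => y != x) s = k.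
    have := count_predC (fun y => y == x) s; rewrite hsz (count_uniq_mem _ us) xs.
    by rewrite add1n => -[].
  apply => y; rewrite mem_filter => /andP [yx ys]; split; first exact: hs.
  by rewrite ltn_neqAle yx /=; apply: (@leq_bigmax_seq _ s xpredT (fun y => y) y).
move: hk; rewrite leq_eqVlt => /orP [/eqP ->|/rk_down //]; by exists x.
Qed.
End Rank.

Section Match.
Variables (I J : Type) (SI : I -> Prop) (SJ : J -> Prop) (gI : I -> nat) (gJ : J -> nat).
Hypothesis injI : forall i1 i2, SI i1 -> SI i2 -> gI i1 = gI i2 -> i1 = i2.
Hypothesis injJ : forall j1 j2, SJ j1 -> SJ j2 -> gJ j1 = gJ j2 -> j1 = j2.

Lemma in_map_nat (T : Type) (g : T -> nat) (L : seq T) y : y \in map g L -> exists b, List.In b L /\ g b = y.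
Proof.
elim: L => [|a L IH] //=; rewrite inE => /orP [/eqP ->|/IH [b [hb e]]]; first by exists a; split => //; left.
by exists b; split => //; right.
Qed.

Lemma toNat (T : Type) (S : T -> Prop) (g : T -> nat) (inj : forall i1 i2, S i1 -> S i2 -> g i1 = g i2 -> i1 = i2)
  (L : seq T) : List.NoDup L -> (forall i, List.In i L -> S i) ->
  [/\ uniq (map g L), (forall y, y \in map g L -> exists i, S i /\ g i = y) & size (map g L) = size L].
Proof.
elim: L => [|a L IH] nd hS; first by [].
inversion nd; subst.
have hS' : forall i, List.In i L -> S i by move=> i hi; apply: hS; right.
case: (IH H2 hS') => u1 u2 u3; split.
- rewrite /= u1 andbT; apply/negP => /in_map_nat [b [hb e]].
  by apply: H1; rewrite -(inj b a) //; [exact: hS' | apply: hS; left].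
- move=> y; rewrite /= inE => /orP [/eqP ->|/u2 //]; exists a; split => //; by apply: hS; left.
- by rewrite !size_map.
Qed.

Lemma fromNat (T : Type) (S : T -> Prop) (g : T -> nat) (s : seq nat) : uniq s ->
  (forall y, y \in s -> exists i, S i /\ g i = y) ->
  exists L : seq T, [/\ List.NoDup L, (forall i, List.In i L -> S i) & map g L = s].
Proof.
elim: s => [|a s IH] /=; first by exists nil; split => //; constructor.
move=> /andP [ha us] hs.
have hs' : forall y, y \in s -> exists i, S i /\ g i = y by move=> y hy; apply: hs; rewrite inE hy orbT.
have [L [nd hL eL]] := IH us hs'.
have [i [Si gi]] := hs a (mem_head _ _).
exists (i :: L); split => //=.
- constructor => // hi; move: ha; rewrite -eL -gi => /negP; apply.
  by elim: (L) hi => //= b L' IH' [->|/IH']; rewrite inE ?eqxx // => ->; rewrite orbT.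
- by move=> j [<-|/hL].
- by rewrite gi eL.
Qed.

End Match.

Definition imP (T : Type) (S : T -> Prop) (g : T -> nat) n := exists i, S i /\ g i = n.

Section Match2.
Variables (I J : Type) (SI : I -> Prop) (SJ : J -> Prop) (gI : I -> nat) (gJ : J -> nat).
Hypothesis injI : forall i1 i2, SI i1 -> SI i2 -> gI i1 = gI i2 -> i1 = i2.
Hypothesis injJ : forall j1 j2, SJ j1 -> SJ j2 -> gJ j1 = gJ j2 -> j1 = j2.
Local Notation GI := (imP SI gI).
Local Notation GJ := (imP SJ gJ).

Lemma ex_rank (d1 : forall L : seq I, List.NoDup L -> (forall i, List.In i L -> SI i) ->
     exists L2 : seq J, [/\ List.NoDup L2, (forall j, List.In j L2 -> SJ j) & (size L <= size L2)%N])
  i : SI i -> exists j, SJ j /\ rk GJ (gJ j) = rk GI (gI i).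
Proof.
move=> Si.
have Gi : GI (gI i) by exists i.
have [s [us [hs hsz]]] := rk_list Gi.
have [L [nd hL eL]] := fromNat (S := SI) (g := gI) us hs.
have [L2 [nd2 hL2 hsz2]] := d1 L nd hL.
have [u1 u2 u3] := toNat injJ nd2 hL2.
have hsz' : (rk GI (gI i)).+1 = size (take (rk GI (gI i)).+1 (map gJ L2)).
  by rewrite size_takel // u3 -hsz -eL size_map.
have [y [[j [Sj gj]] hy]] := rk_of_list (G := GJ) (take_uniq _ u1) (fun y hy => u2 y (mem_take hy)) (esym hsz').
by exists j; split => //; rewrite gj.
Qed.
End Match2.

Section Match3.
Variables (I J : Type) (SI : I -> Prop) (SJ : J -> Prop) (gI : I -> nat) (gJ : J -> nat).
Hypothesis injI : forall i1 i2, SI i1 -> SI i2 -> gI i1 = gI i2 -> i1 = i2.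
Hypothesis injJ : forall j1 j2, SJ j1 -> SJ j2 -> gJ j1 = gJ j2 -> j1 = j2.
Local Notation GI := (imP SI gI).
Local Notation GJ := (imP SJ gJ).

Lemma match_count (j0 : J)
  (d1 : forall L : seq I, List.NoDup L -> (forall i, List.In i L -> SI i) ->
     exists L2 : seq J, [/\ List.NoDup L2, (forall j, List.In j L2 -> SJ j) & (size L <= size L2)%N])
  (d2 : forall L : seq J, List.NoDup L -> (forall j, List.In j L -> SJ j) ->
     exists L2 : seq I, [/\ List.NoDup L2, (forall i, List.In i L2 -> SI i) & (size L <= size L2)%N]) :
  exists f : I -> J, [/\ (forall i, SI i -> SJ (f i)),
    (forall i1 i2, SI i1 -> SI i2 -> f i1 = f i2 -> i1 = i2) &
    (forall j, SJ j -> exists i, SI i /\ f i = j)].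
Proof.
pose f i := match pselect (exists j, SJ j /\ rk GJ (gJ j) = rk GI (gI i)) with
  | left H => projT1 (cid H) | right _ => j0 end.
have hf : forall i, SI i -> SJ (f i) /\ rk GJ (gJ (f i)) = rk GI (gI i).
  move=> i Si; rewrite /f; case: pselect => [H|hn]; first by case: (cid H).
  by exfalso; apply: hn; exact: (ex_rank gI injJ d1 Si).
have GJf : forall i, SI i -> GJ (gJ (f i)) by move=> i Si; exists (f i); split => //; case: (hf i Si).
exists f; split.
- by move=> i Si; case: (hf i Si).
- move=> i1 i2 S1 S2 e; apply: injI => //.
  apply: (rk_inj (G := GI)); [by exists i1 | by exists i2 |].
  by rewrite -(proj2 (hf i1 S1)) -(proj2 (hf i2 S2)) e.
- move=> j Sj.
  have [i [Si ei]] := ex_rank gJ injI d2 Sj.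
  exists i; split => //; apply: injJ => //; first by case: (hf i Si).
  apply: (rk_inj (G := GJ)); [exact: GJf | by exists j |].
  by rewrite (proj2 (hf i Si)) -ei.
Qed.
End Match3.

Local Open Scope ring_scope.

Lemma fin_sum_iso (S : pzRingType) (I : Type) (A : I -> lmodType S) (Bm : lmodType S)
  (locA : forall i, local_End (A i)) (indB : indecomposable Bm) (F : seq I) :
  forall (a : forall i, Bm -> A i) (b : forall i, A i -> Bm),
  (forall i, lin (a i)) -> (forall i, lin (b i)) ->
  (forall v, v = \sum_(i <- F) b i (a i v)) -> exists i, mod_iso (A i) Bm.
Proof.
elim: F => [|i0 F IH] a b ha hb hsum.
  by exfalso; case: (proj1 indB) => m; rewrite (hsum m) big_nil eqxx.
pose u := fun x => a i0 (b i0 x).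
have lu : lin u by apply: lin_comp.
case: (pselect (bijective u)) => [[w w1 w2]|nb].
  have lw : lin w by apply: lin_inv lu w1 w2.
  exists i0; apply: (mod_iso_of (hb i0)).
  apply: (retract_bij (v := fun y => w (a i0 y)) (proj1 (locA i0)) indB (hb i0)).
    by apply: lin_comp lw.
  exact: w1.
have Ju : Jn u by [].
have l1 : lin (fun x => x - u x) by apply: lin_sub => //; exact: lin_id.
have b1 : bijective (fun x => x - u x).
  apply: notJ_bij => // hJ.
  apply: J_id_false; apply: J_ext (J_add (locA i0) Ju hJ) _ => x.
  by rewrite addrC subrK.
case: b1 => w w1 w2.
have lw : lin w by apply: lin_inv l1 w1 w2.
pose t := fun v => v + b i0 (w (a i0 v)).
have lt : lin t by apply: lin_add; [exact: lin_id | apply: lin_comp (lin_comp (ha i0) lw) (hb i0)].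
have et : forall v, t v - b i0 (a i0 (t v)) = v.
  move=> v; rewrite /t (proj1 (ha i0)) (proj1 (hb i0)).
  have := w2 (a i0 v); rewrite /u => e.
  have e' : b i0 (a i0 v) = b i0 (w (a i0 v)) - b i0 (a i0 (b i0 (w (a i0 v)))).
    by rewrite -(linB (hb i0)) e.
  by rewrite e' subrK addrK.
apply: (IH (fun i v => a i (t v)) b) => // [i|v]; first exact: lin_comp.
rewrite -{1}(et v) {1}(hsum (t v)) big_cons.
by rewrite addrC addKr.
Qed.

Lemma cid_eq (T : Type) (P Q : T -> Prop) (h1 : exists x, P x) (h2 : exists x, Q x) :
  P = Q -> projT1 (cid h1) = projT1 (cid h2).
Proof. by move=> e; subst Q; rewrite (Prop_irrelevance h1 h2). Qed.

Theorem corollary5p6 (R : pzRingType) (I J : Type)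
    (A : I -> lmodType R^c) (B : J -> lmodType R^c)
    (hA : forall i, slender (A i) /\ local_End (A i))
    (hB : forall j, slender (B j) /\ indecomposable (B j))
    (hI : nonmeasurable I) (hJ : nonmeasurable J)
    (cA : iso_classes_countable A) (cB : iso_classes_countable B)
    (hiso : prod_iso A B) :
  exists sigma : I -> J, bijective sigma /\ forall i, mod_iso (A i) (B (sigma i)).
Proof.
case: hiso => phi [[psi c1 c2] [padd pscale]].
have locA : forall i, local_End (A i) by move=> i; case: (hA i).
have slA : forall i, slender (A i) by move=> i; case: (hA i).
have slB : forall j, slender (B j) by move=> j; case: (hB j).
have indB : forall j, indecomposable (B j) by move=> j; case: (hB j).
have indA : forall i, indecomposable (A i) by move=> i; apply: local_indec.
have sadd := inv_add c1 c2 padd.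
have sscale := inv_scale c1 c2 pscale.
have existsA : forall j, exists i, mod_iso (A i) (B j).
  move=> j.
  have gadd : forall x y, phi (fun i => x i + y i) j = phi x j + phi y j by move=> x y; rewrite padd.
  have gscale : forall (r : R) x, phi (fun i => (r : R^c) *: x i) j = (r : R^c) *: phi x j.
    by move=> r x; rewrite pscale.
  have [F0 hF0] := los (g := fun x => phi x j) gadd gscale (slB j) hI.
  have [F [ndF hF]] := nodup_exists F0.
  have hs := support_sum (g := fun x => phi x j) gadd ndF (fun x hx => hF0 x (fun i hi => hx i (proj1 (hF i) hi))).
  apply: (fin_sum_iso locA (indB j) (F := F) (a := fun i v => psi (single j v) i)
    (b := fun i y => phi (single i y) j)).
  - by move=> i; apply: lin_ps.
  - by move=> i; apply: lin_ph.
  - move=> v; rewrite -(hs (psi (single j v))) c2; by rewrite single_id.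
pose KI i := fun i' => mod_iso (A i) (A i').
pose KJ i := fun j => mod_iso (A i) (B j).
have hm : forall i, exists f : I -> J, [/\ (forall i', KI i i' -> KJ i (f i')),
    (forall i1 i2, KI i i1 -> KI i i2 -> f i1 = f i2 -> i1 = i2) &
    (forall j, KJ i j -> exists i', KI i i' /\ f i' = j)].
  move=> i.
  have d1 : forall L : seq I, List.NoDup L -> (forall k, List.In k L -> KI i k) ->
      exists L2 : seq J, [/\ List.NoDup L2, (forall j, List.In j L2 -> KJ i j) & (size L <= size L2)%N].
    move=> L nd hL.
    have [L2 [h1 [h2 h3]]] := count_dir c1 c2 padd pscale slA hJ indB (locA i) nd hL.
    by exists L2; split.
  have d2 : forall L : seq J, List.NoDup L -> (forall j, List.In j L -> KJ i j) ->
      exists L2 : seq I, [/\ List.NoDup L2, (forall k, List.In k L2 -> KI i k) & (size L <= size L2)%N].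
    move=> L nd hL.
    have [L2 [h1 [h2 h3]]] := count_dir c2 c1 sadd sscale slB hI indA (locA i) nd hL.
    by exists L2; split.
  have [j0 _] : exists j0, KJ i j0.
    have nd1 : List.NoDup [:: i] by constructor; [by [] | constructor].
    have h1 : forall k, List.In k [:: i] -> KI i k by move=> k [<-|[]]; exact: mod_iso_refl.
    have [L2 [_ h2 h3]] := d1 [:: i] nd1 h1.
    by case: L2 h2 h3 => // j L2 h2 _; exists j; apply: h2; left.
  have [gI hgI] := cA i.
  have [gJ hgJ] : exists g : J -> nat, forall j1 j2, KJ i j1 -> KJ i j2 -> g j1 = g j2 -> j1 = j2.
    case: (pselect (exists j, KJ i j)) => [[j1 hj1]|hn]; last first.
      by exists (fun _ => 0%N) => j1 j2 h1; exfalso; apply: hn; exists j1.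
    have [g hg] := cB j1; exists g => j2 j3 h2 h3; apply: hg.
      by apply: mod_iso_trans (mod_iso_sym hj1) h2.
    by apply: mod_iso_trans (mod_iso_sym hj1) h3.
  exact: (match_count hgI hgJ j0 d1 d2).
case: (choice hm) => fs hfs.
have KIrefl : forall i, exists x, KI i x by move=> i; exists i; apply: mod_iso_refl.
pose rep i := projT1 (cid (KIrefl i)).
have rep_spec : forall i, KI i (rep i) by move=> i; rewrite /rep; case: cid.
have rep_eq : forall i i', mod_iso (A i) (A i') -> rep i = rep i'.
  move=> i i' h; apply: cid_eq; apply: functional_extensionality_dep => k.
  apply: propext; split => hk; rewrite /KI in hk *.
    exact: mod_iso_trans (mod_iso_sym h) hk.
  exact: mod_iso_trans h hk.
pose sigma i := fs (rep i) i.
have KIrep : forall i, KI (rep i) i by move=> i; apply: mod_iso_sym; apply: rep_spec.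
have hiso : forall i, mod_iso (A i) (B (sigma i)).
  move=> i; case: (hfs (rep i)) => h1 _ _.
  exact: mod_iso_trans (rep_spec i) (h1 _ (KIrep i)).
have sinj : forall i1 i2, sigma i1 = sigma i2 -> i1 = i2.
  move=> i1 i2 e.
  have e12 : mod_iso (A i1) (A i2).
    by apply: mod_iso_trans (hiso i1) _; rewrite e; apply: mod_iso_sym.
  have er := rep_eq _ _ e12.
  case: (hfs (rep i1)) => _ h2 _; apply: h2; [exact: KIrep | rewrite er; exact: KIrep | ].
  by move: e; rewrite /sigma er.
have ssurj : forall j, exists i, sigma i = j.
  move=> j; have [i hi] := existsA j.
  case: (hfs (rep i)) => _ _ h3.
  have [i' [hi' ei']] := h3 j (mod_iso_trans (mod_iso_sym (rep_spec i)) hi).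
  exists i'; rewrite /sigma -ei'; congr fs.
  apply: esym; apply: (@eq_trans _ _ (rep (rep i))).
    by apply: rep_eq; apply: rep_spec.
  by apply: rep_eq.
case: (choice ssurj) => tau htau.
exists sigma; split => //.
by exists tau => [i|j]; [apply: sinj; rewrite htau | exact: htau].
Qed.
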